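(* Let $X,Y\in L^\infty$ and $k,b\in\mathbb{K}$. Then (a) $\mathbb{E}[kX+b]=k\,\mathbb{E}[X]+b$; (b) $\mathbb{E}[X+Y]\subseteq \mathbb{E}[X]+\mathbb{E}[Y]=\{a+c: a\in\mathbb{E}[X],\,c\in\mathbb{E}[Y]\}$, with equality when $X$ and $Y$ are independent; (c) if $X$ and $Y$ are independent, then $\mathbb{E}[XY]=\mathbb{E}[X]\,\mathbb{E}[Y]=\{ac: a\in\mathbb{E}[X],\,c\in\mathbb{E}[Y]\}$.
   Context: $\mathbb{K}$ is a local field with non-archimedean absolute value $|\cdot|$ satisfying $|x|=0 \iff x=0$, $|xy|=|x||y|$ and $|x+y|\le |x|\vee|y|$. $(\Omega,\mathcal{F},\mathbb{P})$ is a probability space; random variables equal a.s. are identified. $L^\infty$ is the space of $\mathbb{K}$-valued random variables $X$ with $\|X\|_\infty:=\operatorname{ess\,sup}|X|<\infty$. For $X\in L^\infty$, $\varepsilon(X):=\inf\{\|X-c\|_\infty : c\in\mathbb{K}\}$ and $\mathbb{E}[X]:=\{c\in\mathbb{K} : \|X-c\|_\infty=\varepsilon(X)\}$. *)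

(* Defs.v *)
From HB Require Import structures.
From mathcomp Require Import all_boot all_order all_algebra.
From mathcomp Require Import all_classical all_reals all_analysis ess_sup_inf.
Set Implicit Arguments. Unset Strict Implicit. Unset Printing Implicit Defensive.
Import Order.TTheory GRing.Theory Num.Theory.
Local Open Scope classical_set_scope.
Local Open Scope ring_scope.

(* [nabs] is a non-archimedean absolute value on the field K making K a
   (non-archimedean) local field: nontrivial (= non-discrete topology) and
   locally compact (some closed ball around 0 of positive radius is
   sequentially compact for the metric (x,y) |-> nabs (x - y)). *)
Definition nonarch_local_field_abs (R : realType) (K : fieldType) (nabs : K -> R) : Prop :=
  (forall x, 0 <= nabs x) /\
  (forall x, nabs x = 0 <-> x = 0) /\
  (forall x y, nabs (x * y) = nabs x * nabs y) /\
  (forall x y, nabs (x + y) <= Num.max (nabs x) (nabs y)) /\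
  (exists x, 0 < nabs x /\ nabs x < 1) /\
  (exists r : R, 0 < r /\
     forall u : nat -> K, (forall n, nabs (u n) <= r) ->
       exists phi : nat -> nat, (forall n, (phi n < phi n.+1)%N) /\
         exists l : K, forall e : R, 0 < e ->
           exists N : nat, forall n, (N <= n)%N -> nabs (u (phi n) - l) < e).

Definition openK (R : realType) (K : fieldType) (nabs : K -> R) (U : set K) : Prop :=
  forall x, U x -> exists2 r : R, 0 < r & forall y, nabs (y - x) < r -> U y.

Definition borelK (R : realType) (K : fieldType) (nabs : K -> R) : set (set K) :=
  <<s openK nabs >>.

Definition measurableK (R : realType) (K : fieldType) (nabs : K -> R)
  (d : measure_display) (Omega : measurableType d) (X : Omega -> K) : Prop :=
  forall B, borelK nabs B -> measurable (X @^-1` B).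

Definition normInf (R : realType) (K : fieldType) (nabs : K -> R)
  (d : measure_display) (Omega : measurableType d) (P : probability Omega R)
  (X : Omega -> K) : \bar R :=
  ess_sup P (fun w => (nabs (X w))%:E).

Definition inLinf (R : realType) (K : fieldType) (nabs : K -> R)
  (d : measure_display) (Omega : measurableType d) (P : probability Omega R)
  (X : Omega -> K) : Prop :=
  measurableK nabs X /\ (normInf nabs P X < +oo)%E.

Definition epsK (R : realType) (K : fieldType) (nabs : K -> R)
  (d : measure_display) (Omega : measurableType d) (P : probability Omega R)
  (X : Omega -> K) : \bar R :=
  ereal_inf [set normInf nabs P (fun w => X w - c) | c in [set: K]].

Definition ExpK (R : realType) (K : fieldType) (nabs : K -> R)
  (d : measure_display) (Omega : measurableType d) (P : probability Omega R)
  (X : Omega -> K) : set K :=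
  [set c | normInf nabs P (fun w => X w - c) = epsK nabs P X].

Definition indepK (R : realType) (K : fieldType) (nabs : K -> R)
  (d : measure_display) (Omega : measurableType d) (P : probability Omega R)
  (X Y : Omega -> K) : Prop :=
  forall A B, borelK nabs A -> borelK nabs B ->
    P (X @^-1` A `&` Y @^-1` B) = (P (X @^-1` A) * P (Y @^-1` B))%E.

(* Main.v *)
Require Import Defs.
From HB Require Import structures.
From mathcomp Require Import all_boot all_order all_algebra.
From mathcomp Require Import all_classical all_reals all_analysis ess_sup_inf.
From mathcomp Require Import ring lra.
Import Order.TTheory GRing.Theory Num.Theory.
Local Open Scope classical_set_scope.
Local Open Scope ring_scope.
Set Implicit Arguments. Unset Strict Implicit. Unset Printing Implicit Defensive.
Section Abs.
Variables (R : realType) (K : fieldType) (nabs : K -> R).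
Variable hK : nonarch_local_field_abs nabs.

Lemma nabs_ge0 x : 0 <= nabs x.
Proof. by case: hK. Qed.
Lemma nabs_eq0 x : nabs x = 0 <-> x = 0.
Proof. by case: hK => _ []. Qed.
Lemma nabsM x y : nabs (x * y) = nabs x * nabs y.
Proof. by case: hK => _ [] _ []. Qed.
Lemma nabsD x y : nabs (x + y) <= Num.max (nabs x) (nabs y).
Proof. by case: hK => _ [] _ [] _ []. Qed.
Lemma nabs0 : nabs 0 = 0.
Proof. by apply/nabs_eq0. Qed.
Lemma nabs_gt0 x : x != 0 -> 0 < nabs x.
Proof. move=> /eqP hx; rewrite lt_neqAle nabs_ge0 andbT; apply/eqP => h; apply: hx; exact/nabs_eq0. Qed.
Lemma nabs1 : nabs 1 = 1.
Proof.
have h1 : 0 < nabs 1 by apply: nabs_gt0; exact: oner_neq0.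
have := nabsM 1 1; rewrite mul1r => h.
apply: (mulfI (lt0r_neq0 h1)); by rewrite -h mulr1.
Qed.
Lemma nabsN x : nabs (- x) = nabs x.
Proof.
have hm : nabs (-1) = 1.
  have h := nabsM (-1) (-1); rewrite mulrNN mulr1 nabs1 in h.
  have h0 := nabs_ge0 (-1).
  have : (nabs (-1) - 1) * (nabs (-1) + 1) = 0 by rewrite -subr_sqr expr1n h subrr.
  move/eqP; rewrite mulf_eq0 => /orP [/eqP|]; first by move/eqP; rewrite subr_eq0 => /eqP.
  by rewrite gt_eqF // ltr_wpDl.
by rewrite -mulN1r nabsM hm mul1r.
Qed.
Lemma nabsB x y : nabs (x - y) = nabs (y - x).
Proof. by rewrite -nabsN opprB. Qed.
Lemma nabsV x : nabs (x^-1) = (nabs x)^-1.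
Proof.
have [->|hx] := eqVneq x 0; first by rewrite invr0 nabs0 invr0.
have := nabsM x x^-1; rewrite (mulfV hx) nabs1 => h.
have hp := nabs_gt0 hx.
by rewrite -[RHS]mulr1 h mulrA mulVf ?mul1r // lt0r_neq0.
Qed.
Lemma nabs_tri x y z : nabs (x - z) <= Num.max (nabs (x - y)) (nabs (y - z)).
Proof. by rewrite (_ : x - z = (x - y) + (y - z)) ?nabsD // addrA subrK. Qed.
Lemma nabs_le x y r : nabs x <= r -> nabs y <= r -> nabs (x + y) <= r.
Proof. by move=> h1 h2; apply: le_trans (nabsD _ _) _; rewrite ge_max h1 h2. Qed.
Lemma nabs_leB x y z r : nabs (x - y) <= r -> nabs (y - z) <= r -> nabs (x - z) <= r.
Proof. by move=> h1 h2; apply: le_trans (nabs_tri x y z) _; rewrite ge_max h1 h2. Qed.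
Lemma nabs_eq x y : nabs (x - y) < nabs x -> nabs y = nabs x.
Proof.
move=> h; apply/eqP; rewrite eq_le; apply/andP; split.
  have := nabsD (y - x) x; rewrite subrK nabsB => h2; apply: le_trans h2 _.
  by rewrite ge_max lexx ltW.
have := nabsD (x - y) y; rewrite subrK => h2.
move: h2; rewrite le_max => /orP [h2|//]; by move: (lt_le_trans h h2); rewrite ltxx.
Qed.
End Abs.
Section Compact.
Variables (R : realType) (K : fieldType) (nabs : K -> R).
Variable hK : nonarch_local_field_abs nabs.

Lemma small_pow (q e : R) : 0 <= q -> q < 1 -> 0 < e -> exists m : nat, q ^+ m < e.
Proof.
move=> q0 q1 e0.
have hq : `|q| < 1 by rewrite ger0_norm.
have := cvgr0_norm_lt (fun n => q ^+ n) (cvg_expr hq) e e0.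
case=> N _ h; exists N; have := h N (leqnn N); rewrite /= ger0_norm //.
exact: exprn_ge0.
Qed.

Lemma small_inv (e : R) : 0 < e -> exists n : nat, (n.+1%:R)^-1 < e.
Proof.
move=> e0; have e1 : 0 <= e^-1 by rewrite invr_ge0 ltW.
have h := archi_boundP e1.
set n := Num.Def.archi_bound _ in h.
exists n; rewrite -(invrK e) ltf_pV2 ?posrE ?invr_gt0 //.
  by apply: lt_le_trans h _; rewrite ler_nat.
Qed.

Lemma nabsX x m : nabs (x ^+ m) = nabs x ^+ m.
Proof. elim: m => [|m ih]; first by rewrite !expr0 (nabs1 hK). by rewrite !exprS (nabsM hK) ih. Qed.

Lemma bounded_subseq (u : nat -> K) (M : R) : (forall n, nabs (u n) <= M) ->
  exists phi : nat -> nat, (forall n, (phi n < phi n.+1)%N) /\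
    exists l : K, forall e : R, 0 < e ->
      exists N : nat, forall n, (N <= n)%N -> nabs (u (phi n) - l) < e.
Proof.
move=> hu.
case: (hK) => _ [_ [_ [_ [[x0 [hx0 hx1]] [r [hr hc]]]]]].
have x0n : x0 != 0 by apply/eqP => h; move: hx0; rewrite h (nabs0 hK) ltxx.
have [m hm] := small_pow (ltW hx0) hx1 (divr_gt0 hr (ltr_pwDr ltr01 (normr_ge0 M))).
set q := nabs x0 ^+ m in hm.
have q0 : 0 < q by exact: exprn_gt0.
have xm0 : x0 ^+ m != 0 by exact: expf_neq0.
have hq : nabs (x0 ^+ m) = q by rewrite nabsX.
have [|phi [hphi [l hl]]] := hc (fun n => x0 ^+ m * u n).
  move=> n; rewrite (nabsM hK) hq.
  have h1 : q * (`|M| + 1) < r by rewrite -ltr_pdivlMr // ltr_pwDr.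
  apply: le_trans (ltW h1).
  rewrite ler_pM2l //; apply: le_trans (hu n) _.
  by rewrite (le_trans (ler_norm M)) // lerDl.
  exists phi; split => //; exists (l / x0 ^+ m) => e e0.
  have [N hN] := hl (e * q) (mulr_gt0 e0 q0).
  exists N => n hn; have := hN n hn.
  have -> : x0 ^+ m * u (phi n) - l = x0 ^+ m * (u (phi n) - l / x0 ^+ m).
    by rewrite mulrBr mulrCA mulfV // mulr1.
  by rewrite (nabsM hK) hq mulrC ltr_pM2r.
Qed.
End Compact.

Lemma incr_ge (phi : nat -> nat) : (forall n, (phi n < phi n.+1)%N) -> forall n, (n <= phi n)%N.
Proof. move=> h; elim=> [//|n ih]; exact: leq_ltn_trans ih (h n). Qed.

Lemma inv_mono (R : realType) (j k : nat) : (0 < j)%N -> (j <= k)%N -> (k%:R)^-1 <= (j%:R)^-1 :> R.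
Proof.
move=> j0 jk; have k0 : (0 < k)%N by exact: leq_trans j0 jk.
by rewrite lef_pV2 ?posrE ?ltr0n // ler_nat.
Qed.
Section Prob.
Variables (R : realType) (K : fieldType) (nabs : K -> R).
Variable hK : nonarch_local_field_abs nabs.
Variables (d : measure_display) (Omega : measurableType d) (P : probability Omega R).

Local Notation ae Q := (\forall w \ae (P : measure _ _), Q w).

Definition NN (Z : Omega -> K) (c : K) := normInf nabs P (fun w => Z w - c).
Definition bnd (Z : Omega -> K) := exists y : R, ae (fun w => nabs (Z w) <= y).
Definition Nr Z c := fine (NN Z c).

Lemma PT : (0 < P [set: Omega])%E.
Proof. by have -> : P [set: Omega] = 1%E by exact: probability_setT. Qed.

Lemma ae_ex (Q : Omega -> Prop) : ae Q -> exists w, Q w.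
Proof.
move=> h.
have h1 := PT.
have pf := ae_properfilter_algebraOfSetsType h1.
exact: (@filter_ex _ _ pf _ h).
Qed.

Lemma NN_le Z c (y : R) : (NN Z c <= y%:E)%E <-> ae (fun w => nabs (Z w - c) <= y).
Proof.
rewrite /NN /normInf; split.
  move/ess_supP => h; apply: filterS h => w /=; by rewrite lee_fin.
move=> h; apply/ess_supP; apply: filterS h => w /=; by rewrite lee_fin.
Qed.

Lemma NN_ge Z c : ae (fun w => ((nabs (Z w - c))%:E <= NN Z c)%E).
Proof. exact: ess_sup_ge. Qed.

Lemma NN_ge0 Z c : (0 <= NN Z c)%E.
Proof.
apply: ess_sup_gee; first exact: PT.
by apply: nearW => w; rewrite lee_fin (nabs_ge0 hK).
Qed.

Lemma bnd_NN Z : bnd Z -> forall c, NN Z c = (Nr Z c)%:E.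
Proof.
case=> y hy c; rewrite /Nr.
have h : (NN Z c <= (Num.max y (nabs c))%:E)%E.
  apply/NN_le; apply: filterS hy => w hw.
  rewrite -(nabsN hK c); apply: le_trans (nabsD hK _ _) _.
  by rewrite ge_max !le_max hw lexx orbT.
have h0 := NN_ge0 Z c.
move: h h0; case: (NN Z c) => //=.
Qed.

Section B.
Variables (Z : Omega -> K) (hZ : bnd Z).

Lemma Nr_ge0 c : 0 <= Nr Z c.
Proof. by have := NN_ge0 Z c; rewrite (bnd_NN hZ) lee_fin. Qed.

Lemma Nr_ae c : ae (fun w => nabs (Z w - c) <= Nr Z c).
Proof. by apply: filterS (NN_ge Z c) => w; rewrite (bnd_NN hZ) lee_fin. Qed.

Lemma Nr_le c y : ae (fun w => nabs (Z w - c) <= y) -> Nr Z c <= y.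
Proof. by move/NN_le; rewrite (bnd_NN hZ) lee_fin. Qed.

Lemma ExpK_min c : ExpK nabs P Z c <-> forall c', Nr Z c <= Nr Z c'.
Proof.
rewrite /ExpK /epsK /=; split.
  move=> h c'; rewrite -lee_fin -!(bnd_NN hZ) /NN h.
  by apply: ereal_inf_lbound; exists c'.
move=> h; apply/eqP; rewrite eq_le; apply/andP; split.
  by apply/ereal_infP => _ [c' _ <-]; have := h c'; rewrite -lee_fin -!(bnd_NN hZ).
by apply: ereal_inf_lbound; exists c.
Qed.

Lemma Nr_shift c c' : Nr Z c' <= Num.max (Nr Z c) (nabs (c - c')).
Proof.
apply: Nr_le; apply: filterS (Nr_ae c) => w hw.
apply: (nabs_leB hK (y := c)); first by apply: le_trans hw _; rewrite le_max lexx.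
by rewrite le_max lexx orbT.
Qed.

Lemma ball_in c0 a : ExpK nabs P Z c0 -> nabs (a - c0) <= Nr Z c0 -> ExpK nabs P Z a.
Proof.
move=> /ExpK_min h0 ha; apply/ExpK_min => c'.
apply: le_trans (h0 c'); apply: le_trans (Nr_shift c0 a) _.
by rewrite ge_max lexx (nabsB hK).
Qed.

Lemma Nr_eq c a : ExpK nabs P Z c -> ExpK nabs P Z a -> Nr Z a = Nr Z c.
Proof. by move=> /ExpK_min h1 /ExpK_min h2; apply/eqP; rewrite eq_le h1 h2. Qed.

Lemma ball_out c0 a : ExpK nabs P Z c0 -> ExpK nabs P Z a -> nabs (a - c0) <= Nr Z c0.
Proof.
move=> h1 h2; have e := Nr_eq h1 h2.
have [w [hw1 hw2]] := ae_ex (filterI (Nr_ae a) (Nr_ae c0)).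
by apply: (nabs_leB hK (y := Z w)) hw2; rewrite (nabsB hK) -e.
Qed.

Lemma exist_min : exists c, ExpK nabs P Z c.
Proof.
set S := [set NN Z c | c in [set: K]].
have e0 : (0 <= ereal_inf S)%E by apply/ereal_infP => _ [c _ <-]; exact: NN_ge0.
have e1 : (ereal_inf S <= (Nr Z 0)%:E)%E by apply: ereal_inf_lbound; exists 0 => //; rewrite (bnd_NN hZ).
have [er her] : exists er : R, ereal_inf S = er%:E.
  by move: e0 e1; case: (ereal_inf S) => // r; exists r.
have er0 : 0 <= er by rewrite -lee_fin -her.
have erle c : er <= Nr Z c by rewrite -lee_fin -her -(bnd_NN hZ); apply: ereal_inf_lbound; exists c.
have hex n : exists c, Nr Z c < er + (n.+1%:R)^-1.
  have : (ereal_inf S < (er + (n.+1%:R)^-1)%:E)%E by rewrite her lte_fin ltrDl invr_gt0 ltr0n.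
  by case/ereal_inf_ltP => _ [c _ <-]; rewrite (bnd_NN hZ) lte_fin => h; exists c.
have [u hu] := choice hex.
have ub n : nabs (u n) <= Nr Z 0 + er + 1.
  have [w [hw1 hw2]] := ae_ex (filterI (Nr_ae 0) (Nr_ae (u n))).
  have -> : u n = u n - 0 by rewrite subr0.
  apply: (nabs_leB hK (y := Z w)).
    rewrite (nabsB hK); apply: le_trans hw2 _; apply: le_trans (ltW (hu n)) _.
    have h1 : (n.+1%:R)^-1 <= 1 :> R by rewrite invr_le1 ?ler1n ?unitfE ?pnatr_eq0 ?ltr0n.
    have h2 := Nr_ge0 0; move: h1; set t := (n.+1%:R^-1 : R); lra.
  by apply: le_trans hw1 _; lra.
have [phi [hphi [l hl]]] := bounded_subseq hK ub.
exists l; apply/ExpK_min => c'; apply: le_trans (erle c').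
apply/ler_addgt0Pr => e he.
have [N hN] := hl e he.
have [n0 hn0] := small_inv he.
set n := maxn N n0.
apply: le_trans (Nr_shift (u (phi n)) l) _; rewrite ge_max; apply/andP; split.
  apply: le_trans (ltW (hu _)) _; rewrite lerD2l; apply: le_trans (ltW hn0).
  apply: inv_mono => //; rewrite ltnS; apply: leq_trans (incr_ge hphi n).
  exact: leq_maxr.
by apply: le_trans (ltW (hN n (leq_maxl _ _))) _; rewrite lerDr.
Qed.

Lemma attain : 0 < Nr Z 0 -> exists a, nabs a = Nr Z 0.
Proof.
set D := Nr Z 0 => D0.
have hex n : exists w, D - D * (n.+2%:R)^-1 < nabs (Z w - 0) /\ nabs (Z w - 0) <= D.
  apply: contrapT => hn.
  have : D <= D - D * (n.+2%:R)^-1.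
    apply: Nr_le; apply: filterS (Nr_ae 0) => w hw.
    rewrite leNgt; apply/negP => hlt; apply: hn; by exists w.
  have : 0 < D * (n.+2%:R)^-1 by rewrite mulr_gt0 // invr_gt0 ltr0n.
  set t := D * _; lra.
have [w hw] := choice hex.
have ub n : nabs (Z (w n) - 0) <= D by case: (hw n).
have [phi [hphi [l hl]]] := bounded_subseq hK ub.
have D2 : 0 < D / 2 by rewrite divr_gt0.
have [N hN] := hl _ D2.
have half n : D / 2 <= D - D * (n.+2%:R)^-1.
  have : (n.+2%:R)^-1 <= 2^-1 :> R by apply: (@inv_mono _ 2 n.+2).
  move: D0; set t := (n.+2%:R^-1 : R) => D0 ht.
  have : D * t <= D * 2^-1 by rewrite ler_pM2l.
  set s := (2^-1 : R) in ht *.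
  have : D * s + D * s = D by rewrite -mulrDr /s -div1r -splitr mulr1.
  lra.
have eqn n : (N <= n)%N -> nabs l = nabs (Z (w (phi n)) - 0).
  move=> hn; apply: (nabs_eq hK); apply: lt_le_trans (hN n hn) _.
  by apply: le_trans (half (phi n)) (ltW _); case: (hw (phi n)).
exists l; apply/eqP; rewrite eq_le; apply/andP; split.
  by rewrite (eqn N (leqnn N)) ub.
rewrite leNgt; apply/negP => hl1.
have dl : 0 < (D - nabs l) / D by rewrite divr_gt0 // subr_gt0.
have [n0 hn0] := small_inv dl.
set n := maxn N n0.
have h1 : ((phi n).+2%:R)^-1 <= (n0.+1%:R)^-1 :> R.
  apply: inv_mono => //; rewrite ltnS; apply: leq_trans (leq_maxr N n0) _.
  by apply: leq_trans (incr_ge hphi n) _.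
have h2 := eqn n (leq_maxl _ _).
have [h3 _] := hw (phi n).
rewrite -h2 in h3.
move: hn0; rewrite ltr_pdivlMr // => hn0.
move: h1 hn0 h3; set a := (((phi n).+2)%:R^-1 : R); set b := (n0.+1%:R^-1 : R).
move=> h1 hn0 h3.
have : D * a <= D * b by rewrite ler_pM2l.
rewrite mulrC in hn0; lra.
Qed.

End B.

Lemma ae_pt Z c y : ae (fun w => nabs (Z w - c) <= y) -> bnd Z.
Proof.
move=> h; exists (Num.max y (nabs c)); apply: filterS h => w hw.
have -> : Z w = (Z w - c) + c by rewrite subrK.
by apply: le_trans (nabsD hK _ _) _; rewrite ge_max !le_max hw lexx orbT.
Qed.

End Prob.
Section Meas.
Variables (R : realType) (K : fieldType) (nabs : K -> R).
Variable hK : nonarch_local_field_abs nabs.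
Variables (d : measure_display) (Omega : measurableType d) (P : probability Omega R).

Local Notation ae Q := (\forall w \ae (P : measure _ _), Q w).

Lemma borel_open U : openK nabs U -> borelK nabs U.
Proof. by move=> h; apply: sub_sigma_algebra. Qed.

Lemma borelC A : borelK nabs A -> borelK nabs (~` A).
Proof. by move=> h; rewrite -setTD; apply: sigma_algebraCD. Qed.

Lemma open_gt c t : openK nabs [set k | t < nabs (k - c)].
Proof.
move=> x /= hx.
case: (ltrgt0P (nabs (x - c))) => h0.
- exists (nabs (x - c)) => // y hy.
  suff -> : nabs (y - c) = nabs (x - c) by [].
  apply: (nabs_eq hK); rewrite (_ : x - c - (y - c) = x - y); last by rewrite opprB addrA subrK.
  by rewrite (nabsB hK).
- by move: (nabs_ge0 hK (x - c)); rewrite leNgt h0.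
- exists 1; first exact: ltr01.
  move=> y _; move: hx; rewrite h0 => hx.
  by apply: lt_le_trans hx (nabs_ge0 hK _).
Qed.

Lemma borel_ball c t : borelK nabs [set k | nabs (k - c) <= t].
Proof.
rewrite (_ : [set k | nabs (k - c) <= t] = ~` [set k | t < nabs (k - c)]).
  by apply: borelC; apply: borel_open; apply: open_gt.
apply/seteqP; split => k /= h.
  by apply/negP; rewrite -leNgt.
by rewrite leNgt; apply/negP.
Qed.

Lemma borel_gt c t : borelK nabs [set k | t < nabs (k - c)].
Proof. by apply: borel_open; apply: open_gt. Qed.

Lemma mpre (X : Omega -> K) B : measurableK nabs X -> borelK nabs B -> measurable (X @^-1` B).
Proof. by move=> h hB; apply: h. Qed.

Lemma null_sub A N : measurable A -> measurable N -> P N = 0%E -> A `<=` N -> P A = 0%E.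
Proof.
move=> mA mN hN hAN; apply/eqP; rewrite eq_le measure_ge0 andbT.
by rewrite -hN; apply: le_measure => //; rewrite inE.
Qed.

Lemma indep_core (X Y : Omega -> K) : measurableK nabs X -> measurableK nabs Y ->
  (forall A B, borelK nabs A -> borelK nabs B ->
     P (X @^-1` A `&` Y @^-1` B) = (P (X @^-1` A) * P (Y @^-1` B))%E) ->
  forall A B, borelK nabs A -> borelK nabs B -> (0 < P (X @^-1` A))%E ->
  ae (fun w => A (X w) -> B (Y w)) -> ae (fun w => B (Y w)).
Proof.
move=> mX mY hI A B hA hB hp [N [mN N0 hN]].
have hCB := borelC hB.
have h0 : P (X @^-1` A `&` Y @^-1` (~` B)) = 0%E.
  apply: null_sub mN N0 _; first by apply: measurableI; apply: mpre.
  by move=> w [/= h1 h2]; apply: hN => /= h; apply: h2; apply: h.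
rewrite hI // in h0; move/eqP: h0; rewrite mule_eq0 => /orP [/eqP h|/eqP h].
  by move: hp; rewrite h ltxx.
exists (Y @^-1` (~` B)); split => //; first exact: mpre.
Qed.

End Meas.

Lemma eq_le0 (R : realType) (x : \bar R) : x = 0%E -> (x <= 0)%E.
Proof. by move=> ->. Qed.

Section PB.
Variables (R : realType) (K : fieldType) (nabs : K -> R).
Variable hK : nonarch_local_field_abs nabs.
Variables (d : measure_display) (Omega : measurableType d) (P : probability Omega R).
Local Notation ae Q := (\forall w \ae (P : measure _ _), Q w).

Lemma pos_ball (Z : Omega -> K) (mZ : measurableK nabs Z) (y : R)
  (hb : ae (fun w => nabs (Z w) <= y)) S (hS : borelK nabs S)
  (hp : (0 < P (Z @^-1` S))%E) (rho : R) (hr : 0 < rho) :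
  exists z, S z /\ (0 < P (Z @^-1` [set k | (nabs (k - z) <= rho)%R]))%E.
Proof.
apply: contrapT => H.
have H0 z : S z -> P (Z @^-1` [set k | (nabs (k - z) <= rho)%R]) = 0%E.
  move=> hz; apply/eqP; rewrite eq_le measure_ge0 andbT leNgt; apply/negP => h.
  by apply: H; exists z.
case: hb => N0 [mN0 PN0 hN0].
pose ball z := Z @^-1` [set k | nabs (k - z) <= rho].
have mball z : measurable (ball z) by apply: (mpre mZ); apply: borel_ball.
pose U (L : seq K) := foldr (fun z A => ball z `|` A) N0 L.
pose good (L : seq K) := forall z, z \in L -> S z.
have hU L : good L -> measurable (U L) /\ P (U L) = 0%E.
  elim: L => [|z L ih] hg; first by [].
  have [m0 p0] : measurable (U L) /\ P (U L) = 0%E.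
    by apply: ih => z' hz'; apply: hg; rewrite in_cons hz' orbT.
  have mU : measurable (U (z :: L)) by apply: measurableU.
  split => //; apply/eqP; rewrite eq_le measure_ge0 andbT.
  have hz : S z by apply: hg; rewrite mem_head.
  apply: le_trans (measureU2 _ (mball z) m0) _.
  rewrite -[leRHS](adde0 0); apply: leeD; apply: eq_le0.
    exact: (H0 z hz).
  exact: p0.
have Uin L z' : z' \in L -> ball z' `<=` U L.
  elim: L => [//|z L ih]; rewrite in_cons => /orP [/eqP ->|h] w hw /=.
    by left.
  by right; apply: ih.
have hex L : exists z, good L -> [/\ S z, nabs z <= y &
    forall z', z' \in L -> rho < nabs (z - z')].
  have [hg|hg] := pselect (good L); last by exists 0.
  have [mU PU] := hU L hg.
  have [w [hw1 hw2]] : exists w, S (Z w) /\ ~ U L w.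
    apply: contrapT => hn.
    have hsub : Z @^-1` S `<=` U L.
      move=> w hw; apply: contrapT => hw2; apply: hn; by exists w.
    have := null_sub (mpre mZ hS) mU PU hsub.
    by move=> h; move: hp; rewrite h ltxx.
  exists (Z w) => _; split => //.
    apply: contrapT => hn; apply: hw2.
    have : N0 w by apply: hN0.
    by elim: (L) => [|z L' ih] //= h; right; apply: ih.
  move=> z' hz'; rewrite ltNge; apply/negP => hle; apply: hw2.
  by apply: (Uin L z' hz').
have [f hf] := choice hex.
pose Ls n := iter n (fun L => f L :: L) [::].
have gLs n : good (Ls n).
  elim: n => [//|n ih] z /=; rewrite in_cons => /orP [/eqP ->|h].
    by have [] := hf _ ih.
  exact: ih.
pose u n := f (Ls n).
have mem n m : (m < n)%N -> u m \in Ls n.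
  elim: n => [//|n ih]; rewrite ltnS leq_eqVlt => /orP [/eqP ->|h] /=.
    by rewrite mem_head.
  by rewrite in_cons (ih h) orbT.
have sep n m : (m < n)%N -> rho < nabs (u n - u m).
  by move=> h; have [_ _] := hf _ (gLs n); apply; apply: mem.
have ub n : nabs (u n) <= y by have [] := hf _ (gLs n).
have [phi [hphi [l hl]]] := bounded_subseq hK ub.
have [N hN] := hl rho hr.
have := sep _ _ (hphi N).
have h1 := hN N.+1 (leqnSn N).
have h2 := hN N (leqnn N).
rewrite (nabsB hK) in h2.
have h3 := nabs_tri hK (u (phi N.+1)) l (u (phi N)).
move=> h4.
have : Num.max (nabs (u (phi N.+1) - l)) (nabs (l - u (phi N))) < rho.
  by rewrite gt_max h1 h2.
by move=> h5; move: (lt_le_trans h4 h3); rewrite ltNge (ltW h5).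
Qed.

End PB.
Section Factor.
Variables (R : realType) (K : fieldType) (nabs : K -> R).
Variable hK : nonarch_local_field_abs nabs.

Lemma nabs_sub_le x y : nabs (x - y) <= Num.max (nabs x) (nabs y).
Proof. by apply: le_trans (nabsD hK _ _) _; rewrite (nabsN hK). Qed.

Lemma factor_half (x0 y0 u : K) (Dx Dy Ax Ay : R) :
  0 <= Dx -> 0 <= Dy -> Ax = Num.max (nabs x0) Dx -> Ay = Num.max (nabs y0) Dy ->
  (nabs x0 <= Dx -> 0 < Dx -> exists a, nabs a = Dx) ->
  Ay * Dx <= Ax * Dy -> nabs (u - x0 * y0) <= Ax * Dy ->
  exists a c, [/\ nabs (a - x0) <= Dx, nabs (c - y0) <= Dy & u = a * c].
Proof.
move=> Dx0 Dy0 hAx hAy att hle hu.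
have Ay0 : nabs y0 <= Ay by rewrite hAy le_max lexx.
case: (leP (nabs x0) Dx) => hx.
  have eAx : Ax = Dx by rewrite hAx; apply/max_idPr.
  rewrite eAx in hle hu.
  move: Dx0; rewrite le_eqVlt => /orP [/eqP eD|Dp].
    exists x0, y0; rewrite !subrr (nabs0 hK) Dy0 -eD lexx; split => //.
    move: hu; rewrite -eD mul0r => hu.
    have : nabs (u - x0 * y0) = 0 by apply/eqP; rewrite eq_le hu (nabs_ge0 hK).
    by move/(nabs_eq0 hK)/eqP; rewrite subr_eq0 => /eqP.
  have AyD : Ay <= Dy by move: hle; rewrite [Dx * Dy]mulrC ler_pM2r.
  have y0D : nabs y0 <= Dy by apply: le_trans Ay0 AyD.
  have [a ha] := att hx Dp.
  have an : a != 0 by apply/eqP => h; move: Dp; rewrite -ha h (nabs0 hK) ltxx.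
  exists a, (u / a); split.
  - have := nabs_sub_le a x0; rewrite ha => h; apply: le_trans h _.
    by rewrite ge_max lexx hx.
  - have hU : nabs u <= Dx * Dy.
      rewrite (_ : u = (u - x0 * y0) + x0 * y0); last by rewrite subrK.
      apply: (nabs_le hK) => //; rewrite (nabsM hK); apply: ler_pM => //; exact: nabs_ge0.
    have hc : nabs (u / a) <= Dy.
      by rewrite (nabsM hK) (nabsV hK) ha ler_pdivrMr // mulrC.
    by apply: le_trans (nabs_sub_le _ _) _; rewrite ge_max hc y0D.
  - by rewrite mulrC divfK.
have eAx : Ax = nabs x0 by rewrite hAx; apply/max_idPl/ltW.
have x0p : 0 < nabs x0 by apply: le_lt_trans hx.
have x0n : x0 != 0 by apply/eqP => h; move: x0p; rewrite h (nabs0 hK) ltxx.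
exists x0, (u / x0); split.
- by rewrite subrr (nabs0 hK).
- have -> : u / x0 - y0 = (u - x0 * y0) / x0 by field.
  by rewrite (nabsM hK) (nabsV hK) ler_pdivrMr // [Dy * _]mulrC -eAx.
- by rewrite mulrC divfK.
Qed.

Lemma factor (x0 y0 u : K) (Dx Dy Ax Ay : R) :
  0 <= Dx -> 0 <= Dy -> Ax = Num.max (nabs x0) Dx -> Ay = Num.max (nabs y0) Dy ->
  (nabs x0 <= Dx -> 0 < Dx -> exists a, nabs a = Dx) ->
  (nabs y0 <= Dy -> 0 < Dy -> exists a, nabs a = Dy) ->
  nabs (u - x0 * y0) <= Num.max (Ax * Dy) (Ay * Dx) ->
  exists a c, [/\ nabs (a - x0) <= Dx, nabs (c - y0) <= Dy & u = a * c].
Proof.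
move=> Dx0 Dy0 hAx hAy attx atty hu.
case: (leP (Ay * Dx) (Ax * Dy)) => h.
  apply: (factor_half Dx0 Dy0 hAx hAy attx h); apply: le_trans hu _; by rewrite ge_max lexx h.
have hu' : nabs (u - y0 * x0) <= Ay * Dx.
  rewrite [y0 * x0]mulrC; apply: le_trans hu _; by rewrite ge_max (ltW h) lexx.
have [c [a [h1 h2 h3]]] := factor_half Dy0 Dx0 hAy hAx atty (ltW h) hu'.
by exists a, c; split => //; rewrite h3 mulrC.
Qed.
End Factor.
Section Main.
Variables (R : realType) (K : fieldType) (nabs : K -> R).
Variable hK : nonarch_local_field_abs nabs.
Variables (d : measure_display) (Omega : measurableType d) (P : probability Omega R).
Local Notation ae Q := (\forall w \ae (P : measure _ _), Q w).
Local Notation Nr := (Nr nabs P).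
Local Notation E := (ExpK nabs P).
Local Notation bnd := (bnd nabs P).

Lemma bnd_of Z : (normInf nabs P Z < +oo)%E -> bnd Z.
Proof.
move=> h.
have e : NN nabs P Z 0 = normInf nabs P Z.
  by rewrite /NN; congr normInf; apply/funext => w; rewrite subr0.
have h0 := NN_ge0 hK P Z 0.
move: (NN_ge nabs P Z 0); rewrite e in h0 *; move: h h0.
case: (normInf nabs P Z) => // y _ _ hy; exists y.
by apply: filterS hy => w; rewrite lee_fin subr0.
Qed.

Lemma Nr_cen Z : bnd Z -> ae (fun w => nabs (Z w) <= Nr Z 0).
Proof. by move=> hZ; apply: filterS (Nr_ae hK hZ 0) => w; rewrite subr0. Qed.

Lemma cen_le Z z : bnd Z -> E Z z -> nabs z <= Nr Z 0.
Proof.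
move=> hZ hz.
have hm := (proj1 (ExpK_min hK hZ z) hz 0).
have [w [h1 h2]] := ae_ex (filterI (Nr_ae hK hZ 0) (Nr_ae hK hZ z)).
rewrite -(subr0 z); apply: (nabs_leB hK (y := Z w)).
  by rewrite (nabsB hK); apply: le_trans h2 hm.
exact: h1.
Qed.

Lemma cen_eq Z z : bnd Z -> E Z z -> Nr Z 0 = Num.max (nabs z) (Nr Z z).
Proof.
move=> hZ hz; apply/eqP; rewrite eq_le; apply/andP; split.
  by apply: le_trans (Nr_shift hK hZ z 0) _; rewrite subr0 maxC.
by rewrite ge_max (cen_le hZ hz) (proj1 (ExpK_min hK hZ z) hz 0).
Qed.

Lemma partA X (hX : bnd X) (k b : K) :
  E (fun w => k * X w + b) = [set k * a + b | a in E X].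
Proof.
set Z := fun w => k * X w + b.
have hZ : bnd Z.
  case: hX => y hy; exists (Num.max (nabs k * y) (nabs b)).
  apply: filterS hy => w hw; rewrite /Z; apply: le_trans (nabsD hK _ _) _.
  rewrite ge_max !le_max lexx orbT andbT (nabsM hK); apply/orP; left.
  by apply: ler_wpM2l hw; exact: nabs_ge0.
have [ek|kn] := eqVneq k 0.
  have NZ c : Nr Z c = nabs (b - c).
    apply/eqP; rewrite eq_le; apply/andP; split.
      by apply: (Nr_le hK hZ); apply: nearW => w; rewrite /Z ek mul0r add0r.
    have [w hw] := ae_ex (Nr_ae hK hZ c); move: hw; by rewrite /Z ek mul0r add0r.
  have [a0 ha0] := exist_min hK hX.
  apply/seteqP; split => c /=.
    move/(ExpK_min hK hZ) => h; exists a0 => //; rewrite ek mul0r add0r.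
    have := h b; rewrite !NZ subrr (nabs0 hK) => h2.
    have : nabs (b - c) = 0 by apply/eqP; rewrite eq_le h2 nabs_ge0.
    by move/(nabs_eq0 hK)/eqP; rewrite subr_eq0 => /eqP.
  case=> a _ <-; rewrite ek mul0r add0r; apply/(ExpK_min hK hZ) => c'.
  by rewrite !NZ subrr (nabs0 hK) nabs_ge0.
have kp : 0 < nabs k by exact: nabs_gt0.
have NZ a : Nr Z (k * a + b) = nabs k * Nr X a.
  have ed w : Z w - (k * a + b) = k * (X w - a).
    by rewrite /Z; ring.
  apply/eqP; rewrite eq_le; apply/andP; split.
    apply: (Nr_le hK hZ); apply: filterS (Nr_ae hK hX a) => w hw.
    by rewrite ed (nabsM hK) ler_pM2l.
  rewrite mulrC -ler_pdivlMr //; apply: (Nr_le hK hX).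
  apply: filterS (Nr_ae hK hZ (k * a + b)) => w hw.
  by rewrite ler_pdivlMr // mulrC -(nabsM hK) -ed.
have hc c : c = k * ((c - b) / k) + b by rewrite mulrC divfK // subrK.
apply/seteqP; split => c /=.
  move/(ExpK_min hK hZ) => h; exists ((c - b) / k); last by rewrite -hc.
  apply/(ExpK_min hK hX) => a'; have := h (k * a' + b).
  by rewrite {1}(hc c) !NZ ler_pM2l.
case=> a /(ExpK_min hK hX) ha <-; apply/(ExpK_min hK hZ) => c'.
by rewrite (hc c') !NZ ler_pM2l.
Qed.

Lemma bnd_add X Y : bnd X -> bnd Y -> bnd (fun w => X w + Y w).
Proof.
case=> y1 h1 [y2 h2]; exists (Num.max y1 y2).
apply: filterS2 h1 h2 => w a1 a2; apply: le_trans (nabsD hK _ _) _.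
by rewrite ge_max !le_max a1 a2 orbT.
Qed.

Lemma bnd_mul X Y : bnd X -> bnd Y -> bnd (fun w => X w * Y w).
Proof.
case=> y1 h1 [y2 h2]; exists (y1 * y2).
apply: filterS2 h1 h2 => w a1 a2; rewrite (nabsM hK).
by apply: ler_pM => //; exact: nabs_ge0.
Qed.

Lemma borelT : borelK nabs setT.
Proof.
rewrite -setC0; apply: borelC; apply: borel_open => x [].
Qed.

Lemma sum_incl X Y (hX : bnd X) (hY : bnd Y) u : E (fun w => X w + Y w) u ->
  exists a c, [/\ E X a, E Y c & u = a + c].
Proof.
set S := fun w => X w + Y w.
have hS : bnd S := bnd_add hX hY.
move=> hu.
have [x0 hx0] := exist_min hK hX.
have [y0 hy0] := exist_min hK hY.
set M := Num.max (Nr X x0) (Nr Y y0).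
have h1 : Nr S (x0 + y0) <= M.
  apply: (Nr_le hK hS); apply: filterS2 (Nr_ae hK hX x0) (Nr_ae hK hY y0) => w a1 a2.
  have -> : S w - (x0 + y0) = (X w - x0) + (Y w - y0) by rewrite /S; ring.
  by apply: (nabs_le hK); [apply: le_trans a1 _; rewrite le_max lexx | apply: le_trans a2 _; rewrite le_max lexx orbT].
have h2 := proj1 (ExpK_min hK hS u) hu (x0 + y0).
have [w [a1 a2]] := ae_ex (filterI (Nr_ae hK hS u) (Nr_ae hK hS (x0 + y0))).
have hd : nabs (u - (x0 + y0)) <= M.
  apply: (nabs_leB hK (y := S w)); last by apply: le_trans a2 h1.
  by rewrite (nabsB hK); apply: le_trans a1 (le_trans h2 h1).
case: (leP (Nr Y y0) (Nr X x0)) => hxy.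
  exists (u - y0), y0; split => //; last by rewrite subrK.
  apply: (ball_in hK hX hx0).
  have -> : u - y0 - x0 = u - (x0 + y0) by ring.
  by apply: le_trans hd _; rewrite /M ge_max lexx hxy.
exists x0, (u - x0); split => //; last by rewrite addrC subrK.
apply: (ball_in hK hY hy0).
have -> : u - x0 - y0 = u - (x0 + y0) by ring.
by apply: le_trans hd _; rewrite /M ge_max lexx (ltW hxy).
Qed.

Lemma sum_lower X Y (mX : measurableK nabs X) (mY : measurableK nabs Y)
  (hX : bnd X) (hY : bnd Y)
  (hI : forall A B, borelK nabs A -> borelK nabs B ->
     P (Y @^-1` A `&` X @^-1` B) = (P (Y @^-1` A) * P (X @^-1` B))%E)
  v x1 : E X x1 -> Nr X x1 <= Nr (fun w => X w + Y w) v.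
Proof.
set S := fun w => X w + Y w.
have hS : bnd S := bnd_add hX hY.
move=> hx1; rewrite leNgt; apply/negP => hs.
set s := Nr S v in hs; set Dx := Nr X x1 in hs.
have s0 : 0 <= s := Nr_ge0 hK hS v.
set rho := (s + Dx) / 2.
have r0 : 0 < rho by rewrite /rho; lra.
have r1 : rho < Dx by rewrite /rho; lra.
have r2 : s <= rho by rewrite /rho; lra.
have hpT : (0 < P (Y @^-1` setT))%E by rewrite preimage_setT; exact: PT.
have [y1 [_ hp]] := pos_ball hK mY (Nr_cen hY) borelT hpT r0.
have hae : ae (fun w => [set k | nabs (k - y1) <= rho] (Y w) ->
                        [set k | nabs (k - (v - y1)) <= rho] (X w)).
  apply: filterS (Nr_ae hK hS v) => w hw /= hy.
  have -> : X w - (v - y1) = (S w - v) - (Y w - y1) by rewrite /S; ring.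
  apply: le_trans (nabs_sub_le hK _ _) _.
  by rewrite ge_max hy (le_trans hw r2).
have := indep_core mY mX hI (borel_ball hK y1 rho) (borel_ball hK (v - y1) rho) hp hae.
move=> hX1.
have h3 : Nr X (v - y1) <= rho by apply: (Nr_le hK hX).
have h4 := proj1 (ExpK_min hK hX x1) hx1 (v - y1).
by move: (le_lt_trans (le_trans h4 h3) r1); rewrite ltxx.
Qed.

Lemma prod_lower X Y (mX : measurableK nabs X) (mY : measurableK nabs Y)
  (hX : bnd X) (hY : bnd Y)
  (hI : forall A B, borelK nabs A -> borelK nabs B ->
     P (X @^-1` A `&` Y @^-1` B) = (P (X @^-1` A) * P (Y @^-1` B))%E)
  v y1 : E Y y1 -> Nr X 0 * Nr Y y1 <= Nr (fun w => X w * Y w) v.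
Proof.
set Q := fun w => X w * Y w.
have hQ : bnd Q := bnd_mul hX hY.
move=> hy1; rewrite leNgt; apply/negP => hs.
set s := Nr Q v in hs; set Ax := Nr X 0 in hs; set Dy := Nr Y y1 in hs.
set RY := Nr Y 0.
have s0 : 0 <= s := Nr_ge0 hK hQ v.
have Ax0 : 0 <= Ax := Nr_ge0 hK hX 0.
have Dy0 : 0 <= Dy := Nr_ge0 hK hY y1.
have RY0 : 0 <= RY := Nr_ge0 hK hY 0.
have Dyp : 0 < Dy.
  rewrite lt_neqAle Dy0 andbT; apply/eqP => h; move: hs; rewrite -h mulr0 ltNge s0.
  by [].
have q1 : s / Dy < Ax by rewrite ltr_pdivrMr.
have q0 : 0 <= s / Dy by rewrite divr_ge0 // ltW.
set q := s / Dy in q0 q1.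
set t := (q + Ax) / 2.
have t1 : q < t by rewrite /t; lra.
have t2 : t < Ax by rewrite /t; lra.
have tp : 0 < t by rewrite /t; lra.
have st : s < t * Dy by rewrite -ltr_pdivrMr.
have R1p : 0 < RY + 1 by apply: ltr_wpDl.
have R1 : RY + 1 != 0 by rewrite gt_eqF.
set rho := t * Dy / (RY + 1).
have rp : 0 < rho by rewrite /rho divr_gt0 // mulr_gt0.
have rR : rho * RY < t * Dy.
  have e : rho * RY + rho = t * Dy by rewrite -{2}(mulr1 rho) -mulrDr /rho divfK.
  move: e; set a := rho * RY; set b := t * Dy; lra.
have hpS : (0 < P (X @^-1` [set k | (t < nabs (k - 0))%R]))%E.
  rewrite lt_neqAle measure_ge0 andbT; apply/negP => /eqP h.
  have hae : ae (fun w => nabs (X w - 0) <= t).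
    exists (X @^-1` [set k | (t < nabs (k - 0))%R]); split => //.
      by apply: (mpre mX); apply: borel_gt.
    by move=> w /= hw; rewrite ltNge; apply/negP.
  have := Nr_le hK hX hae; rewrite -/Ax => h2.
  by move: (lt_le_trans t2 h2); rewrite ltxx.
have [x1 [hx1 hp]] := pos_ball hK mX (Nr_cen hX) (borel_gt hK 0 t) hpS rp.
move: hx1; rewrite /= subr0 => hx1.
have x1p : 0 < nabs x1 by apply: lt_trans hx1.
have x1n : x1 != 0 by apply/eqP => h; move: x1p; rewrite h (nabs0 hK) ltxx.
set m := Num.max s (rho * RY).
have mlt : m < t * Dy by rewrite gt_max st rR.
have hae : ae (fun w => [set k | nabs (k - x1) <= rho] (X w) ->
                        [set k | nabs (k - v / x1) <= m / nabs x1] (Y w)).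
  apply: filterS2 (Nr_ae hK hQ v) (Nr_ae hK hY 0) => w hq hy /= hx.
  have -> : Y w - v / x1 = (x1 * Y w - v) / x1 by field.
  rewrite (nabsM hK) (nabsV hK) ler_pdivlMr // divfK ?gt_eqF //.
  have -> : x1 * Y w - v = (Q w - v) - (X w - x1) * (Y w - 0) by rewrite /Q; ring.
  apply: le_trans (nabs_sub_le hK _ _) _; rewrite ge_max; apply/andP; split.
    by apply: le_trans hq _; rewrite le_max lexx.
  rewrite (nabsM hK); apply: le_trans (_ : _ <= rho * RY) _; last by rewrite le_max lexx orbT.
  by apply: ler_pM => //; exact: nabs_ge0.
have := indep_core mX mY hI (borel_ball hK x1 rho) (borel_ball hK (v / x1) (m / nabs x1)) hp hae.
move=> hY1.
have h3 : Nr Y (v / x1) <= m / nabs x1 by apply: (Nr_le hK hY).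
have h4 := proj1 (ExpK_min hK hY y1) hy1 (v / x1).
have h5 : Dy * nabs x1 <= m by rewrite -ler_pdivlMr //; apply: le_trans h4 h3.
have h6 : t * Dy < Dy * nabs x1 by rewrite mulrC ltr_pM2l.
by move: (le_lt_trans h5 (lt_trans mlt h6)); rewrite ltxx.
Qed.

Lemma sum_eq X Y (mX : measurableK nabs X) (mY : measurableK nabs Y)
  (hX : bnd X) (hY : bnd Y)
  (hI1 : forall A B, borelK nabs A -> borelK nabs B ->
     P (X @^-1` A `&` Y @^-1` B) = (P (X @^-1` A) * P (Y @^-1` B))%E)
  (hI2 : forall A B, borelK nabs A -> borelK nabs B ->
     P (Y @^-1` A `&` X @^-1` B) = (P (Y @^-1` A) * P (X @^-1` B))%E) :
  E (fun w => X w + Y w) = [set a + c | a in E X & c in E Y].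
Proof.
set S := fun w => X w + Y w.
have hS : bnd S := bnd_add hX hY.
apply/seteqP; split => u.
  move=> /(sum_incl hX hY) [a [c [ha hc ->]]].
  by exists a => //; exists c.
case=> a ha [c hc <-].
have [u0 hu0] := exist_min hK hS.
have [a0 [c0 [ha0 hc0 e0]]] := sum_incl hX hY hu0.
apply: (ball_in hK hS hu0).
have -> : a + c - u0 = (a - a0) + (c - c0) by rewrite e0; ring.
apply: (nabs_le hK).
  apply: le_trans (ball_out hK hX ha0 ha) _.
  by rewrite e0; apply: sum_lower.
apply: le_trans (ball_out hK hY hc0 hc) _.
have -> : S = (fun w => Y w + X w) by apply/funext => w; rewrite /S addrC.
by rewrite e0; apply: sum_lower.
Qed.

Lemma prod_eq X Y (mX : measurableK nabs X) (mY : measurableK nabs Y)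
  (hX : bnd X) (hY : bnd Y)
  (hI1 : forall A B, borelK nabs A -> borelK nabs B ->
     P (X @^-1` A `&` Y @^-1` B) = (P (X @^-1` A) * P (Y @^-1` B))%E)
  (hI2 : forall A B, borelK nabs A -> borelK nabs B ->
     P (Y @^-1` A `&` X @^-1` B) = (P (Y @^-1` A) * P (X @^-1` B))%E) :
  E (fun w => X w * Y w) = [set a * c | a in E X & c in E Y].
Proof.
set Q := fun w => X w * Y w.
have hQ : bnd Q := bnd_mul hX hY.
have [x0 hx0] := exist_min hK hX.
have [y0 hy0] := exist_min hK hY.
set Dx := Nr X x0; set Dy := Nr Y y0; set Ax := Nr X 0; set Ay := Nr Y 0.
have hAx : Ax = Num.max (nabs x0) Dx := cen_eq hX hx0.
have hAy : Ay = Num.max (nabs y0) Dy := cen_eq hY hy0.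
have Dx0 : 0 <= Dx := Nr_ge0 hK hX x0.
have Dy0 : 0 <= Dy := Nr_ge0 hK hY y0.
set M := Num.max (Ax * Dy) (Ay * Dx).
have low v : M <= Nr Q v.
  rewrite ge_max; apply/andP; split; first exact: prod_lower.
  have -> : Q = (fun w => Y w * X w) by apply/funext => w; rewrite /Q mulrC.
  exact: prod_lower.
have up : Nr Q (x0 * y0) <= M.
  apply: (Nr_le hK hQ).
  apply: filterS3 (Nr_ae hK hX x0) (Nr_cen hY) (Nr_ae hK hY y0) => w a1 a2 a3.
  have -> : Q w - x0 * y0 = (X w - x0) * Y w + x0 * (Y w - y0) by rewrite /Q; ring.
  apply: (nabs_le hK); rewrite (nabsM hK).
    apply: le_trans (_ : _ <= Ay * Dx) _; last by rewrite le_max lexx orbT.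
    by rewrite mulrC; apply: ler_pM => //; exact: nabs_ge0.
  apply: le_trans (_ : _ <= Ax * Dy) _; last by rewrite le_max lexx.
  by apply: ler_pM => //; [exact: nabs_ge0 | exact: nabs_ge0 | exact: cen_le].
have E0 : E Q (x0 * y0).
  by apply/(ExpK_min hK hQ) => c'; apply: le_trans up (low c').
apply/seteqP; split => u.
  move=> hu.
  have hd : nabs (u - x0 * y0) <= M by apply: le_trans (ball_out hK hQ E0 hu) up.
  have attx : nabs x0 <= Dx -> 0 < Dx -> exists a, nabs a = Dx.
    move=> h1 h2; have eA : Ax = Dx by rewrite hAx; apply/max_idPr.
    have hp : 0 < Nr X 0 by rewrite -/Ax eA.
    have [a ha] := attain hK hX hp.
    by exists a; rewrite ha -/Ax eA.
  have atty : nabs y0 <= Dy -> 0 < Dy -> exists a, nabs a = Dy.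
    move=> h1 h2; have eA : Ay = Dy by rewrite hAy; apply/max_idPr.
    have hp : 0 < Nr Y 0 by rewrite -/Ay eA.
    have [a ha] := attain hK hY hp.
    by exists a; rewrite ha -/Ay eA.
  have [a [c [h1 h2 h3]]] := factor hK Dx0 Dy0 hAx hAy attx atty hd.
  exists a; first exact: (ball_in hK hX hx0).
  by exists c; [exact: (ball_in hK hY hy0) | rewrite h3].
case=> a ha [c hc <-].
apply: (ball_in hK hQ E0); apply: le_trans (low (x0 * y0)).
have -> : a * c - x0 * y0 = (a - x0) * c + x0 * (c - y0) by ring.
apply: (nabs_le hK); rewrite (nabsM hK).
  apply: le_trans (_ : _ <= Ay * Dx) _; last by rewrite le_max lexx orbT.
  rewrite mulrC; apply: ler_pM => //; [exact: nabs_ge0 | exact: nabs_ge0 | exact: cen_le |].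
  exact: (ball_out hK hX hx0 ha).
apply: le_trans (_ : _ <= Ax * Dy) _; last by rewrite le_max lexx.
apply: ler_pM => //; [exact: nabs_ge0 | exact: nabs_ge0 | exact: cen_le |].
exact: (ball_out hK hY hy0 hc).
Qed.

End Main.
Unset Implicit Arguments.

Theorem mainTheorem2 (R : realType) (K : fieldType) (nabs : K -> R)
  (hK : nonarch_local_field_abs nabs)
  (d : measure_display) (Omega : measurableType d) (P : probability Omega R)
  (X Y : Omega -> K) (hX : inLinf nabs P X) (hY : inLinf nabs P Y) (k b : K) :
  ExpK nabs P (fun w => k * X w + b) = [set k * a + b | a in ExpK nabs P X]
  /\ (ExpK nabs P (fun w => X w + Y w)
        `<=` [set a + c | a in ExpK nabs P X & c in ExpK nabs P Y]
      /\ (indepK nabs P X Y ->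
          ExpK nabs P (fun w => X w + Y w)
            = [set a + c | a in ExpK nabs P X & c in ExpK nabs P Y]))
  /\ (indepK nabs P X Y ->
      ExpK nabs P (fun w => X w * Y w)
        = [set a * c | a in ExpK nabs P X & c in ExpK nabs P Y]).
Proof.
have bX : bnd nabs P X := bnd_of hK (proj2 hX).
have bY : bnd nabs P Y := bnd_of hK (proj2 hY).
have mX := proj1 hX; have mY := proj1 hY.
have swap : indepK nabs P X Y -> forall A B, borelK nabs A -> borelK nabs B ->
    P (Y @^-1` A `&` X @^-1` B) = (P (Y @^-1` A) * P (X @^-1` B))%E.
  by move=> hI A B hA hB; rewrite setIC hI // muleC.
split; first exact: partA.
split; first split.
- move=> u /(sum_incl hK bX bY) [a [c [ha hc ->]]].
  by exists a => //; exists c.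
- by move=> hI; apply: sum_eq => //; apply: swap.
- by move=> hI; apply: prod_eq => //; apply: swap.
Qed.
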